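(* Let $\mathrm{k}$ be an infinite field. For every integer $n\geq4$ and every non-constant polynomial $P\in\mathrm{k}[T]$, the $\mathrm{k}$-algebra $\mathrm{k}[T]/(P^n)$ has infinitely many subalgebras.
   Context: Subalgebras are unital (contain $1$). *)

(* Defs.v *)
From HB Require Import structures.
From mathcomp Require Import all_boot all_order all_algebra.
From mathcomp Require Import boolp classical_sets cardinality.
Set Implicit Arguments. Unset Strict Implicit. Unset Printing Implicit Defensive.
Import GRing.Theory.
Local Open Scope ring_scope.
Local Open Scope classical_set_scope.

(* The k-algebra k[T]/(m) is modelled by its canonical representatives:
   polynomials of size < size m (degree < deg m), with the k-vector space
   operations of {poly k} and multiplication (p, q) |-> (p * q) %% m,
   unit 1 %% m. *)
Definition quot_subalgebra (k : fieldType) (m : {poly k}) (S : set {poly k}) : Prop :=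
  [/\ S `<=` [set p | (size p < size m)%N],
      S (1 %% m),
      (forall p q, S p -> S q -> S (p + q)),
      (forall (c : k) p, S p -> S (c *: p)) &
      (forall p q, S p -> S q -> S ((p * q) %% m))].

(* Main.v *)
Require Import Defs.
From HB Require Import structures.
From mathcomp Require Import all_boot all_order all_algebra.
From mathcomp Require Import boolp classical_sets cardinality.
From mathcomp Require Import zify ring.
Import GRing.Theory.
Local Open Scope ring_scope.
Local Open Scope classical_set_scope.

Section Aux.
Variables (k : fieldType) (n : nat) (P : {poly k}).
Hypotheses (hn : (4 <= n)%N) (hP : (1 < size P)%N).


Definition ww (a : k) : {poly k} := P ^+ (n - 2) * ('X - a%:P).
Definition SS (a : k) : set {poly k} :=
  [set p | exists c e, p = c%:P + e *: ww a].

Lemma size_ww a : (size (ww a) < size (P ^+ n))%N.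
Proof.
have Pn0 : P != 0 by rewrite -size_poly_gt0 (ltn_trans _ hP).
have hx : forall j, size (P ^+ j) = ((size P).-1 * j).+1.
  move=> j; have := size_exp P j; have : P ^+ j != 0 by rewrite expf_neq0.
  rewrite -size_poly_gt0; case: (size (P ^+ j)) => // j1 _ /= -> //.
rewrite /ww size_mul ?expf_neq0 ?polyXsubC_eq0 // size_XsubC !hx.
have e2 : (n = (n - 2) + 2)%N by lia.
move: hP hn; case: (size P) => // s /= hs hn2.
have h2 : (2%R : nat) = 2%N by []. rewrite h2. nia.
Qed.

Lemma size_elt (a c e : k) : (size (c%:P + e *: ww a)%R < size (P ^+ n))%N.
Proof.
apply: leq_ltn_trans (size_polyD _ _) _; rewrite gtn_max; apply/andP; split.
  apply: leq_ltn_trans (size_polyC_leq1 c) _.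
  apply: leq_trans hP _; apply: dvdp_leq.
    by rewrite expf_neq0 // -size_poly_gt0 (ltn_trans _ hP).
  by apply: dvdp_exp; [lia | exact: dvdpp].
exact: leq_ltn_trans (size_scale_leq _ _) (size_ww a).
Qed.

Lemma ww_sq a b : P ^+ n %| ww a * ww b.
Proof.
rewrite /ww mulrACA -exprD .
apply: dvdp_mulr; apply: dvdp_exp2l; lia.
Qed.

Lemma SS_sub a : quot_subalgebra (P ^+ n) (SS a).
Proof.
have m1 : (1 < size (P ^+ n))%N.
  apply: leq_trans hP _; apply: dvdp_leq.
    by rewrite expf_neq0 // -size_poly_gt0 (ltn_trans _ hP).
  by apply: dvdp_exp; [lia | exact: dvdpp].
split.
- by move=> p [c [e ->]]; apply: size_elt.
- exists 1, 0; rewrite scale0r addr0 modp_small //.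
  by rewrite size_polyC oner_neq0.
- move=> p q [c1 [e1 ->]] [c2 [e2 ->]]; exists (c1 + c2), (e1 + e2).
  by rewrite polyCD scalerDl addrACA.
- move=> c p [c1 [e1 ->]]; exists (c * c1), (c * e1).
  by rewrite scalerDr scalerA polyCM mul_polyC.
- move=> p q [c1 [e1 ->]] [c2 [e2 ->]].
  have [r hr] := dvdpP _ _ (ww_sq a a).
  exists (c1 * c2), (c1 * e2 + c2 * e1).
  have -> : (c1%:P + e1 *: ww a) * (c2%:P + e2 *: ww a) =
     ((c1 * c2)%:P + (c1 * e2 + c2 * e1) *: ww a) + (e1 * e2) *: (r * P ^+ n).
    rewrite -hr polyCM !mulrDl !mulrDr -!mul_polyC !polyCD !polyCM; ring.
  by rewrite modpD modpZl modp_mull scaler0 addr0 modp_small // size_elt.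
Qed.

Lemma SS_inj : injective SS.
Proof.
move=> a b hab.
have : SS b (ww a) by rewrite -hab; exists 0, 1; rewrite scale1r add0r.
move=> [c [e he]].
have Pn0 : P ^+ (n - 2) != 0 by rewrite expf_neq0 // -size_poly_gt0 (ltn_trans _ hP).
have hc : c = 0.
  apply/eqP; apply: contraT => c0.
  have hd : P ^+ (n - 2) %| c%:P.
    have -> : c%:P = P ^+ (n - 2) * (('X - a%:P) - e *: ('X - b%:P)).
      by rewrite mulrBr -scalerAr -/(ww a) -/(ww b) he addrK.
    exact: dvdp_mulr.
  have hP2 : P %| c%:P.
    apply: dvdp_trans hd; apply: dvdp_exp; [lia | exact: dvdpp].
  have := dvdp_leq _ hP2; rewrite polyC_eq0 c0 size_polyC c0 => /(_ isT).
  by move=> h; move: (leq_trans hP h).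
move: he; rewrite hc polyC0 add0r /ww scalerAr => /(mulfI Pn0) /(congr1 (horner^~ b)).
rewrite hornerZ !hornerXsubC subrr mulr0 => /eqP; rewrite subr_eq0 => /eqP.
by [].
Qed.

End Aux.

Theorem lemma3p5 (k : fieldType) (hk : infinite_set [set: k])
  (n : nat) (P : {poly k}) :
  (4 <= n)%N -> (1 < size P)%N ->
  infinite_set [set S : set {poly k} | quot_subalgebra (P ^+ n) S].
Proof.
move=> hn hP hfin; apply: hk.
have := @finite_preimage _ _ _ (@SS k n P) _ hfin.
have -> : @SS k n P @^-1` [set S | quot_subalgebra (P ^+ n) S] = [set: k].
  by apply/seteqP; split => // a _; exact: SS_sub.
apply => x y _ _; exact: SS_inj.
Qed.
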